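(* Assume $g$ satisfies (Hg). Let $a\in(0,1)$, $A\in[a,1)$, $k>1$ and $l\in(1,k)$, and set $$d^*(a;l,A,k)=\frac{1}{(k-l)(1-\frac1l)}\max_{s\in[1-\frac aA,1]}\frac{-g(A(1-s);a)}{As}.$$ Then for every $d>d^*(a;l,A,k)$ there exists $\bar c<0$ such that $\mathcal I_{a,d,k}[\bar c,\Psi_{l,A}](\xi)\le0$ for all $\xi\in\mathbb R$.
   Context: $\mathcal I_{a,d,k}[c,\Phi](\xi):=-c\Phi'(\xi)-d\big(\Phi(\xi-1)-(k+1)\Phi(\xi)+k\Phi(\xi+1)\big)-g(\Phi(\xi);a)$. The ($C^1$) function $\Psi_{l,A}:\mathbb R\to\mathbb R$ is $$\Psi_{l,A}(\xi)=\begin{cases}A\big(1-l-\frac{\log l}{3}\big), & \xi\le-1-\frac1l,\\ A\,p_l(\xi), & -1-\frac1l<\xi\le-1,\\ A(1-l^{-\xi}), & \xi>-1,\end{cases}\qquad p_l(\xi)=\frac{\log l}{3}\big(l\xi+1+l\big)^3+1-l-\frac{\log l}{3}.$$ A function $g:\mathbb R\times[0,1]\to\mathbb R$, $(u,a)\mapsto g(u;a)$, satisfies (Hg) if it is $C^1$ and for every $a\in(0,1)$: $g(0;a)=g(a;a)=g(1;a)=0$, $g'(0;a)<0$, $g'(1;a)<0$, $g'(a;a)>0$ (where $g'=\partial_u g$), $g(v;a)>0$ for $v\in(-\infty,0)\cup(a,1)$ and $g(v;a)<0$ for $v\in(0,a)\cup(1,\infty)$. *)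

(* Defs.v *)
From Stdlib Require Import Reals Lra.
From Coquelicot Require Import Coquelicot.
Open Scope R_scope.

Definition cont_on_Rx01 (F : R -> R -> R) : Prop :=
  forall u a, 0 <= a <= 1 ->
    forall eps, 0 < eps -> exists delta, 0 < delta /\
      forall u' a', 0 <= a' <= 1 -> Rabs (u' - u) < delta -> Rabs (a' - a) < delta ->
        Rabs (F u' a' - F u a) < eps.

(* g is C^1 on R x [0,1]: both partial derivatives exist (the one in a is
   taken relative to [0,1], i.e. one-sided at the endpoints) and are
   jointly continuous on R x [0,1]; gu is the partial derivative in u. *)
Definition C1_on_Rx01 (g : R -> R -> R) (gu : R -> R -> R) : Prop :=
  cont_on_Rx01 g /\ cont_on_Rx01 gu /\
  (forall u a, 0 <= a <= 1 -> is_derive (fun v => g v a) u (gu u a)) /\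
  exists ga : R -> R -> R, cont_on_Rx01 ga /\
    forall u a, 0 <= a <= 1 ->
      filterlim (fun b => (g u b - g u a) / (b - a))
        (within (fun b => 0 <= b <= 1 /\ b <> a) (locally a)) (locally (ga u a)).

(* Hypothesis (Hg); g u a stands for g(u;a), gu u a for g'(u;a) = d/du g(u;a). *)
Definition Hg (g : R -> R -> R) : Prop :=
  exists gu : R -> R -> R, C1_on_Rx01 g gu /\
  forall a, 0 < a < 1 ->
    g 0 a = 0 /\ g a a = 0 /\ g 1 a = 0 /\
    gu 0 a < 0 /\ gu 1 a < 0 /\ 0 < gu a a /\
    (forall v, (v < 0 \/ (a < v < 1)) -> 0 < g v a) /\
    (forall v, ((0 < v < a) \/ 1 < v) -> g v a < 0).

Definition opI (g : R -> R -> R) (a d k c : R) (Phi : R -> R) (xi : R) : R :=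
  - c * Derive Phi xi
  - d * (Phi (xi - 1) - (k + 1) * Phi xi + k * Phi (xi + 1))
  - g (Phi xi) a.

Definition p_l (l xi : R) : R :=
  ln l / 3 * (l * xi + 1 + l) ^ 3 + 1 - l - ln l / 3.

Definition Psi (l A : R) (xi : R) : R :=
  if Rle_dec xi (-1 - / l) then A * (1 - l - ln l / 3)
  else if Rle_dec xi (-1) then A * p_l l xi
  else A * (1 - Rpower l (- xi)).

(* The maximum in d^*: taken as the supremum of -g(A(1-s);a)/(A s) over
   s in [1 - a/A, 1] with s > 0 (s = 0 only occurs when A = a, where the
   quotient is defined by continuous extension; the sup equals that max). *)
Definition dstar_max (g : R -> R -> R) (a l A k : R) : Rbar :=
  Lub_Rbar (fun y => exists s, 1 - a / A <= s <= 1 /\ 0 < s /\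
                               y = - g (A * (1 - s)) a / (A * s)).

Definition dstar (g : R -> R -> R) (a l A k : R) : Rbar :=
  Rbar_mult (Finite (/ ((k - l) * (1 - / l)))) (dstar_max g a l A k).

(* Main.v *)
Require Import Defs.
From Stdlib Require Import Reals Lra.
From Coquelicot Require Import Coquelicot.
Open Scope R_scope.

Lemma exp_le' x y : x <= y -> exp x <= exp y.
Proof. intros [H|H]; [left; apply exp_increasing; auto| subst; lra]. Qed.

Lemma lnpos l : 1 < l -> 0 < ln l.
Proof. intros; rewrite <- ln_1; apply ln_increasing; lra. Qed.

Lemma glue (f g1 g2 : R -> R) x0 D r : 0 < r ->
  (forall y, x0 - r < y <= x0 -> f y = g1 y) ->
  (forall y, x0 <= y < x0 + r -> f y = g2 y) ->
  derivable_pt_lim g1 x0 D -> derivable_pt_lim g2 x0 D -> derivable_pt_lim f x0 D.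
Proof.
  intros Hr H1 H2 D1 D2 eps He.
  destruct (D1 eps He) as [d1 Hd1]. destruct (D2 eps He) as [d2 Hd2].
  assert (Hp : 0 < Rmin r (Rmin d1 d2)).
  { apply Rmin_pos; auto; apply Rmin_pos; apply cond_pos. }
  exists (mkposreal _ Hp). intros h Hh Hhd. simpl in Hhd.
  assert (Hm1 := Rmin_l r (Rmin d1 d2)). assert (Hm2 := Rmin_r r (Rmin d1 d2)).
  assert (Hm3 := Rmin_l d1 d2). assert (Hm4 := Rmin_r d1 d2).
  assert (Ha : Rabs h < r /\ Rabs h < d1 /\ Rabs h < d2) by lra.
  destruct Ha as (Ha1 & Ha2 & Ha3).
  destruct (Rle_or_lt h 0) as [Hn|Hn].
  - rewrite (H1 (x0+h)), (H1 x0).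
    + apply Hd1; auto.
    + lra.
    + rewrite Rabs_left1 in Ha1 by lra. lra.
  - rewrite (H2 (x0+h)), (H2 x0).
    + apply Hd2; auto.
    + lra.
    + rewrite Rabs_right in Ha1 by lra. lra.
Qed.

Section S.
Variables (l A : R).
Hypothesis Hl : 1 < l.

Lemma Psi_c y : y <= -1 - / l -> Psi l A y = A * (1 - l - ln l / 3).
Proof. intros H; unfold Psi; destruct (Rle_dec y (-1 - /l)); lra. Qed.
Lemma Psi_p y : -1 - / l < y <= -1 -> Psi l A y = A * p_l l y.
Proof. intros H; unfold Psi; destruct (Rle_dec y (-1 - /l)); [lra|];
  destruct (Rle_dec y (-1)); lra. Qed.
Lemma Psi_e y : -1 < y -> Psi l A y = A * (1 - exp (- y * ln l)).
Proof. intros H; unfold Psi; destruct (Rle_dec y (-1 - /l)).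
  - assert (0 < / l) by (apply Rinv_0_lt_compat; lra). lra.
  - destruct (Rle_dec y (-1)); [lra|]. unfold Rpower. reflexivity. Qed.

Lemma dp y : is_derive (fun y => A * p_l l y) y (A * ln l * l * (l*y+1+l)^2).
Proof. unfold p_l. auto_derive; auto. field. Qed.
Lemma de y : is_derive (fun y => A * (1 - exp (- y * ln l))) y (A * ln l * exp (- y * ln l)).
Proof. auto_derive; auto. ring. Qed.

Lemma p_at1 : p_l l (-1 - / l) = 1 - l - ln l / 3.
Proof. unfold p_l. replace (l * (-1 - / l) + 1 + l) with 0 by (field; lra). ring. Qed.
Lemma p_at2 : p_l l (-1) = 1 - l.
Proof. unfold p_l. replace (l * (-1) + 1 + l) with 1 by ring. ring. Qed.

Definition Dpsi y := if Rle_dec y (-1 - / l) then 0 else if Rle_dec y (-1) then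
   A * ln l * l * (l*y+1+l)^2 else A * ln l * exp (- y * ln l).

Lemma Derive_Psi y : Derive (Psi l A) y = Dpsi y.
Proof.
  assert (Hil : 0 < / l < 1).
  { split. apply Rinv_0_lt_compat; lra. rewrite <- Rinv_1. apply Rinv_lt_contravar; lra. }
  apply is_derive_unique. unfold Dpsi.
  destruct (Rle_dec y (-1 - /l)) as [H1|H1]; [destruct H1 as [H1|H1]|].
  - apply is_derive_ext_loc with (fun _ => A * (1 - l - ln l / 3)).
    + apply (filter_imp (fun u => u < -1 - /l)).
      * intros u Hu. rewrite Psi_c; lra.
      * apply open_lt; auto.
    + apply (is_derive_const (K:=R_AbsRing) (V:=R_NormedModule)).
  - subst y. apply is_derive_Reals.
    apply glue with (fun _ => A * (1 - l - ln l / 3)) (fun y => A * p_l l y) (/ l); [lra| | | |].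
    + intros u Hu. apply Psi_c; lra.
    + intros u Hu. destruct (Req_dec u (-1 - /l)).
      * subst u. rewrite Psi_c by lra. rewrite p_at1. auto.
      * apply Psi_p; lra.
    + apply derivable_pt_lim_const.
    + replace 0 with (A * ln l * l * (l*(-1 - /l)+1+l)^2) by (field; lra).
      apply is_derive_Reals, dp.
  - destruct (Rle_dec y (-1)) as [H2|H2]; [destruct H2 as [H2|H2]|].
    + apply is_derive_ext_loc with (fun y => A * p_l l y).
      * apply (filter_imp (fun u => -1 - / l < u /\ u < -1)).
        -- intros u Hu. rewrite Psi_p; lra.
        -- apply filter_and; [apply open_gt | apply open_lt]; lra.
      * apply dp.
    + subst y. apply is_derive_Reals.
      replace (A * ln l * l * (l * -1 + 1 + l) ^ 2) with (A * ln l * l) by ring.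
      apply glue with (fun y => A * p_l l y) (fun y => A * (1 - exp (- y * ln l))) (/ l); [lra| | | |].
      * intros u Hu. apply Psi_p; lra.
      * intros u Hu. destruct (Req_dec u (-1)).
        -- subst u. rewrite Psi_p by lra. rewrite p_at2.
           replace (- -1 * ln l) with (ln l) by ring. rewrite exp_ln; lra.
        -- apply Psi_e; lra.
      * apply is_derive_Reals.
        replace (A * ln l * l) with (A * ln l * l * (l * -1 + 1 + l) ^ 2) by ring. apply dp.
      * replace (A * ln l * l) with (A * ln l * exp (- -1 * ln l)).
        apply is_derive_Reals, de.
        replace (- -1 * ln l) with (ln l) by ring. rewrite exp_ln; lra.
    + apply is_derive_ext_loc with (fun y => A * (1 - exp (- y * ln l))).
      * apply (filter_imp (fun u => -1 < u)).
        -- intros u Hu. rewrite Psi_e; lra.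
        -- apply open_gt; lra.
      * exact (de y).
Qed.
End S.

Lemma exp_shift l y : 1 < l -> exp (- y * ln l) = l * exp (- (y+1) * ln l).
Proof. intros Hl. replace (- y * ln l) with (ln l + - (y+1) * ln l) by ring.
  rewrite exp_plus, exp_ln; lra. Qed.

Lemma Psi_ge l A y : 1 < l -> 0 < A -> A * (1 - l - ln l / 3) <= Psi l A y.
Proof.
  intros Hl HA. assert (HL := lnpos l Hl).
  assert (Hil : 0 < / l) by (apply Rinv_0_lt_compat; lra).
  destruct (Rle_dec y (-1 - /l)).
  - rewrite Psi_c; lra.
  - destruct (Rle_dec y (-1)).
    + rewrite Psi_p by lra. apply Rmult_le_compat_l; [lra|]. unfold p_l.
      assert (Ht : 0 < l * y + 1 + l).
      { assert (l * (y - (-1 - /l)) > 0) by (apply Rmult_lt_0_compat; lra).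
        replace (l * y + 1 + l) with (l * (y - (-1 - /l))) by (field; lra). lra. }
      assert (0 <= (l*y+1+l)^3) by (apply pow_le; lra).
      assert (0 <= ln l / 3 * (l*y+1+l)^3) by (apply Rmult_le_pos; lra). lra.
    + rewrite Psi_e by lra. apply Rmult_le_compat_l; [lra|].
      rewrite exp_shift by lra.
      assert (exp (- (y+1) * ln l) < exp 0) by (apply exp_increasing; nra).
      rewrite exp_0 in H.
      nra.
Qed.

Lemma Psi_low l A y : 1 < l -> 0 < A -> A * (1 - exp (- y * ln l)) <= Psi l A y.
Proof.
  intros Hl HA. assert (HL := lnpos l Hl).
  assert (Hil : 0 < / l) by (apply Rinv_0_lt_compat; lra).
  destruct (Rle_dec y (-1 - /l)).
  - rewrite Psi_c by lra. apply Rmult_le_compat_l; [lra|].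
    assert (exp ((1 + / l) * ln l) <= exp (- y * ln l)) by (apply exp_le'; nra).
    replace ((1 + / l) * ln l) with (ln l + ln l * / l) in H by ring.
    rewrite exp_plus, exp_ln in H by lra.
    assert (H2 := exp_ineq1_le (ln l * / l)).
    assert (l * (ln l * / l) = ln l) by (field; lra).
    nra.
  - destruct (Rle_dec y (-1)).
    + rewrite Psi_p by lra. apply Rmult_le_compat_l; [lra|]. unfold p_l.
      rewrite exp_shift by lra.
      assert (H2 := exp_ineq1_le (- (y+1) * ln l)).
      assert (Ht : 0 < l * y + 1 + l).
      { assert (l * (y - (-1 - /l)) > 0) by (apply Rmult_lt_0_compat; lra).
        replace (l * y + 1 + l) with (l * (y - (-1 - /l))) by (field; lra). lra. }
      set (t := l * y + 1 + l) in *.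
      assert (E : ln l / 3 * t ^ 3 + 1 - l - ln l / 3 - (1 - l + l * ln l * (y+1))
                  = ln l / 3 * ((t - 1)^2 * (t + 2))) by (unfold t; field).
      assert (0 <= ln l / 3 * ((t - 1)^2 * (t + 2))).
      { apply Rmult_le_pos; [lra|]. apply Rmult_le_pos; [apply pow2_ge_0|lra]. }
      nra.
    + rewrite Psi_e by lra. lra.
Qed.

Theorem lemma6p2 (g : R -> R -> R) (a A k l : R) :
  Hg g ->
  0 < a < 1 -> a <= A < 1 -> 1 < k -> 1 < l < k ->
  forall d : R, Rbar_lt (dstar g a l A k) (Finite d) ->
  exists cbar : R, cbar < 0 /\
    forall xi : R, opI g a d k cbar (Psi l A) xi <= 0.
Proof.
  intros [gu [_ Hg]] Ha HA Hk Hl d Hd.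
  destruct (Hg a Ha) as (g0 & _ & _ & _ & _ & _ & gpos & _).
  assert (HL := lnpos l (proj1 Hl)). assert (HA0 : 0 < A) by lra.
  assert (Hil : 0 < / l < 1).
  { split. apply Rinv_0_lt_compat; lra. rewrite <- Rinv_1. apply Rinv_lt_contravar; lra. }
  set (K := (k - l) * (1 - / l)).
  assert (HK : 0 < K) by (apply Rmult_lt_0_compat; lra).
  unfold dstar, dstar_max in Hd.
  set (S := fun y => exists s, 1 - a / A <= s <= 1 /\ 0 < s /\
                               y = - g (A * (1 - s)) a / (A * s)) in *.
  assert (HaA : 0 < a / A) by (apply Rdiv_lt_0_compat; lra).
  assert (S0 : S 0).
  { exists 1. split; [lra|]. split; [lra|].
    replace (A * (1 - 1)) with 0 by ring. rewrite g0. field. lra. }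
  destruct (Lub_Rbar_correct S) as [Hub _].
  destruct (Lub_Rbar S) as [M| |] eqn:EM.
  2: { exfalso. revert Hd. unfold Rbar_mult, Rbar_mult'. fold K.
       destruct (Rle_dec 0 (/ K)) as [H|H].
       - assert (0 < / K) by (apply Rinv_0_lt_compat; lra).
         destruct (Rle_lt_or_eq_dec 0 (/ K) H) as [H'|H']; simpl; auto. lra.
       - assert (0 < / K) by (apply Rinv_0_lt_compat; lra). lra. }
  2: { exfalso. apply (Hub 0 S0). }
  simpl in Hd. fold K in Hd.
  assert (HM0 : 0 <= M) by exact (Hub 0 S0).
  assert (HMd : M < d * K).
  { apply Rmult_lt_compat_r with (r := K) in Hd; auto.
    replace (/ K * M * K) with M in Hd by (field; apply Rgt_not_eq; exact HK). lra. }
  assert (Hd0 : 0 < d) by (apply (Rmult_lt_reg_r K); [auto|lra]).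
  assert (HS : forall s, 1 - a / A <= s <= 1 -> 0 < s -> - g (A * (1 - s)) a <= M * (A * s)).
  { intros s H1 H2. assert (Hy := Hub _ (ex_intro _ s (conj H1 (conj H2 eq_refl)))).
    simpl in Hy. assert (0 < A * s) by nra.
    apply Rmult_le_compat_r with (r := A * s) in Hy; [|lra].
    replace (- g (A * (1 - s)) a / (A * s) * (A * s)) with (- g (A * (1 - s)) a) in Hy
      by (field; lra). lra. }
  assert (Hgb : forall s, 0 < s -> - g (A * (1 - s)) a <= M * (A * s)).
  { intros s Hs. assert (0 <= M * (A * s)) by (apply Rmult_le_pos; nra).
    destruct (Rle_lt_dec 1 s) as [H1|H1].
    - destruct (Req_dec s 1) as [E|E].
      + subst s. replace (A * (1 - 1)) with 0 by ring. rewrite g0. lra.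
      + assert (0 < g (A * (1 - s)) a) by (apply gpos; left; nra). lra.
    - destruct (Rle_lt_dec (A * (1 - s)) a) as [H2|H2].
      + apply HS; [|lra]. split; [|lra].
        assert (1 - s <= a / A).
        { apply Rmult_le_reg_l with A; [lra|]. replace (A * (a / A)) with a by (field; lra). lra. }
        lra.
      + assert (0 < g (A * (1 - s)) a) by (apply gpos; right; nra). lra. }
  set (c1 := (d * K - M) / ln l). set (c2 := d * k * (l - 1) / (l * l)).
  assert (Hc1 : 0 < c1) by (apply Rdiv_lt_0_compat; lra).
  assert (Hc2 : 0 < c2).
  { unfold c2. apply Rdiv_lt_0_compat; [|nra]. apply Rmult_lt_0_compat; nra. }
  exists (- Rmin c1 c2). split.
  { assert (0 < Rmin c1 c2) by (apply Rmin_pos; auto). lra. }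
  assert (Hm1 := Rmin_l c1 c2). assert (Hm2 := Rmin_r c1 c2).
  assert (Hmp : 0 < Rmin c1 c2) by (apply Rmin_pos; auto).
  set (m := Rmin c1 c2) in *.
  intros xi. unfold opI. rewrite Derive_Psi by lra. unfold Dpsi.
  destruct (Rle_dec xi (-1 - /l)) as [R1|R1]; [|destruct (Rle_dec xi (-1)) as [R2|R2]].
  -
    rewrite (Psi_c l A (xi - 1)) by lra. rewrite (Psi_c l A xi) by lra.
    assert (HP1 := Psi_ge l A (xi+1) (proj1 Hl) HA0).
    set (C := A * (1 - l - ln l / 3)) in *.
    assert (HC : C < 0) by (unfold C; nra).
    assert (0 < g C a) by (apply gpos; left; auto).
    assert (0 <= (d * k) * (Psi l A (xi + 1) - C)) by (apply Rmult_le_pos; nra).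
    assert (E : d * (C - (k + 1) * C + k * Psi l A (xi + 1)) = (d * k) * (Psi l A (xi + 1) - C)) by ring.
    rewrite E. lra.
  -
    assert (Hx1 : -1 - / l < xi) by lra.
    rewrite (Psi_c l A (xi - 1)) by lra.
    rewrite (Psi_p l A xi) by lra.
    rewrite (Psi_e l A (proj1 Hl) (xi + 1)) by lra.
    assert (Ht : 0 < l * xi + 1 + l).
    { assert (l * (xi - (-1 - /l)) > 0) by (apply Rmult_lt_0_compat; lra).
      replace (l * xi + 1 + l) with (l * (xi - (-1 - /l))) by (field; lra). lra. }
    assert (Ht1 : l * xi + 1 + l <= 1) by nra.
    assert (Exi : xi + 2 = ((l * xi + 1 + l) + l - 1) / l) by (field; lra).
    unfold p_l.
    set (t := l * xi + 1 + l) in *.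
    set (u := exp (- (xi + 1) * ln l)).
    assert (Hu : u <= l - (xi + 2) * ln l).
    { set (v := exp ((xi + 2) * ln l)).
      assert (Euv : u * v = l).
      { unfold u, v. rewrite <- exp_plus. replace (- (xi + 1) * ln l + (xi + 2) * ln l) with (ln l) by ring.
        apply exp_ln; lra. }
      assert (Hu1 : 1 <= u).
      { rewrite <- exp_0. apply exp_le'. assert (0 <= - (xi + 1)) by lra. nra. }
      assert (Hv := exp_ineq1_le ((xi + 2) * ln l)). fold v in Hv.
      assert (0 <= (xi + 2) * ln l) by (apply Rmult_le_pos; lra).
      assert (0 <= (u - 1) * (v - 1)) by (apply Rmult_le_pos; lra).
      nra. }
    assert (Ht2 : t ^ 2 <= 1) by nra.
    assert (Ht3 : t ^ 3 <= t) by nra.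
    assert (Ht3' : 0 <= t ^ 3) by (apply pow_le; lra).
    assert (Hkl : t <= k * t / l).
    { apply Rmult_le_reg_r with l; [lra|]. replace (k * t / l * l) with (k * t) by (field; lra). nra. }
    set (Q := k / 3 * (1 - t ^ 3) + k * t / l - t ^ 3 / 3).
    assert (0 <= k / 3 * (1 - t ^ 3)) by (apply Rmult_le_pos; lra).
    assert (HQ : 0 <= Q) by (unfold Q; lra).
    set (m0 := ln l * k * (l - 1) / l).
    assert (Eid : (1 - l - ln l / 3) - (k + 1) * (ln l / 3 * t ^ 3 + 1 - l - ln l / 3) + k
                    - k * (l - (xi + 2) * ln l) = m0 + ln l * Q).
    { rewrite Exi. unfold m0, Q. field. lra. }
    assert (HLQ : 0 <= ln l * Q) by (apply Rmult_le_pos; lra).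
    assert (Hdisc : A * m0 <= A * (1 - l - ln l / 3) - (k + 1) * (A * (ln l / 3 * t ^ 3 + 1 - l - ln l / 3))
                     + k * (A * (1 - u))).
    { assert (k * u <= k * (l - (xi + 2) * ln l)) by (apply Rmult_le_compat_l; lra).
      assert (A * m0 <= A * (m0 + ln l * Q)) by (apply Rmult_le_compat_l; lra).
      assert (E4 : A * (1 - l - ln l / 3) - (k + 1) * (A * (ln l / 3 * t ^ 3 + 1 - l - ln l / 3))
                     + k * (A * (1 - u)) = A * ((1 - l - ln l / 3) - (k + 1) * (ln l / 3 * t ^ 3 + 1 - l - ln l / 3) + k
                    - k * u)) by ring.
      rewrite E4. apply Rle_trans with (A * (m0 + ln l * Q)); auto.
      apply Rmult_le_compat_l; lra. }
    assert (Hdd := Rmult_le_compat_l d _ _ (Rlt_le _ _ Hd0) Hdisc).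
    assert (Hgp : 0 < g (A * (ln l / 3 * t ^ 3 + 1 - l - ln l / 3)) a).
    { apply gpos; left.
      assert (ln l / 3 * t ^ 3 <= ln l / 3) by (assert (t ^ 3 <= 1) by lra; nra).
      nra. }
    assert (Hmc : m * (A * ln l * l) <= d * (A * m0)).
    { assert (0 <= A * ln l * l) by (apply Rmult_le_pos; [apply Rmult_le_pos|]; lra).
      assert (m * (A * ln l * l) <= c2 * (A * ln l * l)) by (apply Rmult_le_compat_r; lra).
      assert (E5 : c2 * (A * ln l * l) = d * (A * m0)).
      { unfold c2, m0. field. lra. }
      lra. }
    assert (Hmt : m * (A * ln l * l * t ^ 2) <= m * (A * ln l * l)).
    { replace (m * (A * ln l * l * t ^ 2)) with ((m * (A * ln l * l)) * t ^ 2) by ring.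
      assert (0 <= m * (A * ln l * l)) by (apply Rmult_le_pos; [lra|]; apply Rmult_le_pos; [apply Rmult_le_pos|]; lra).
      nra. }
    lra.
  -
    assert (Hx : -1 < xi) by lra.
    rewrite (Psi_e l A (proj1 Hl) xi) by lra. rewrite (Psi_e l A (proj1 Hl) (xi + 1)) by lra.
    assert (HP0 := Psi_low l A (xi - 1) (proj1 Hl) HA0).
    assert (Es := exp_shift l xi (proj1 Hl)).
    assert (Esm := exp_shift l (xi - 1) (proj1 Hl)).
    replace (xi - 1 + 1) with xi in Esm by ring.
    rewrite Esm in HP0.
    set (s1 := exp (- (xi + 1) * ln l)) in *.
    assert (Hs1 : 0 < s1) by apply exp_pos.
    set (s := exp (- xi * ln l)) in *.
    assert (Hs : 0 < s) by (rewrite Es; nra).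
    assert (Hg1 := Hgb s Hs).
    set (P0 := Psi l A (xi - 1)) in *.
    assert (Ebr : A * (1 - l * s) - (k + 1) * (A * (1 - s)) + k * (A * (1 - s1)) = A * s * K).
    { rewrite Es. unfold K. field. lra. }
    assert (Hdisc : d * (A * s * K) <= d * (P0 - (k + 1) * (A * (1 - s)) + k * (A * (1 - s1)))).
    { apply Rmult_le_compat_l; lra. }
    assert (Hmc : m * ln l <= d * K - M).
    { assert (m * ln l <= c1 * ln l) by (apply Rmult_le_compat_r; lra).
      unfold c1 in H. replace ((d * K - M) / ln l * ln l) with (d * K - M) in H by (field; lra). lra. }
    assert (H1 : (A * s) * (m * ln l) <= (A * s) * (d * K - M)) by (apply Rmult_le_compat_l; nra).
    assert (E1 : - - m * (A * ln l * s) = (A * s) * (m * ln l)) by ring.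
    assert (E2 : d * (A * s * K) = (A * s) * (d * K) ) by ring.
    assert (E3 : (A * s) * (d * K - M) = (A * s) * (d * K) - M * (A * s)) by ring.
    rewrite E1. lra.
Qed.
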